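(* Let $\mathbf{L}$ be an integral implicative lattice with canonical frame $(X,\perp,Y,T)$. Then the map $a\mapsto X_a=\{x\in X: a\in x\}$ is an isomorphism of integral implicative lattices from $\mathbf L$ onto $\mathrm{KO}\mathcal{G}(X)$, the algebra of compact-open stable subsets of $X$ with operations $\cap$, the join of $\mathcal G(X)$, and $\Rightarrow$; in particular $X_a\Rightarrow X_b=X_{a\to b}$.
   Context: An integral implicative lattice is a bounded lattice with binary $\to$ satisfying (A1) $(a\vee b)\to c=(a\to c)\wedge(b\to c)$, (A2) $a\to(b\wedge c)=(a\to b)\wedge(a\to c)$, (A3) $a\le b$ iff $1\le a\to b$. The canonical frame of $\mathbf L$: $X$ is the set of filters of $\mathbf L$, $Y$ the set of ideals, $x\perp y$ iff $x\cap y\neq\emptyset$; for $x\in X,v\in Y$, $x\leadsto v$ is the ideal generated by $\{a\to b:a\in x,b\in v\}$, and $yTxv$ iff $x\leadsto v\subseteq y$. For $U\subseteq X$, $U'=\{y\in Y:\forall x\in U\ x\perp y\}$; for $V\subseteq Y$, ${}'V=\{x\in X:\forall y\in V\ x\perp y\}$; $A\subseteq X$ is stable if $A={}'(A')$, $B\subseteq Y$ co-stable if $B=({}'B)'$; $\mathcal G(X)$ is the complete lattice of stable sets (meet is intersection, join of $A,C$ is ${}'((A\cup C)')$). For $A\in\mathcal G(X)$ and co-stable $B$: $A\blacktriangleright B=(\{y:\exists x\in A\,\exists v\in B\ yTxv\})''$ and for $A,C\in\mathcal G(X)$: $A\Rightarrow C={}'(A\blacktriangleright C')$. $X$ carries the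 (spectral) topology generated by the basis $\{X_a:a\in L\}$; $\mathrm{KO}\mathcal G(X)$ is the set of stable sets that are compact and open in this topology. *)

(* Defs.v *)
From Stdlib Require List.
From HB Require Import structures.
From mathcomp Require Import all_boot all_order.
Set Implicit Arguments. Unset Strict Implicit. Unset Printing Implicit Defensive.
Import Order.LTheory.
Local Open Scope order_scope.

Section CanonicalFrame.
Context {disp : Order.disp_t} {L : tbLatticeType disp} (imp : L -> L -> L).

Definition integral_implicative : Prop :=
  (forall a b c : L, imp (a `|` b) c = imp a c `&` imp b c) /\
  (forall a b c : L, imp a (b `&` c) = imp a b `&` imp a c) /\
  (forall a b : L, a <= b <-> \top <= imp a b).

Definition is_filter (x : L -> Prop) : Prop :=
  (exists a, x a) /\ (forall a b, x a -> a <= b -> x b) /\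
  (forall a b, x a -> x b -> x (a `&` b)).

Definition is_ideal (y : L -> Prop) : Prop :=
  (exists a, y a) /\ (forall a b, y b -> a <= b -> y a) /\
  (forall a b, y a -> y b -> y (a `|` b)).

(* X = set of filters, Y = set of ideals *)
Definition filt := {x : L -> Prop | is_filter x}.
Definition idl := {y : L -> Prop | is_ideal y}.

Definition perp (x : filt) (y : idl) : Prop :=
  exists a, proj1_sig x a /\ proj1_sig y a.

Definition rpol (U : filt -> Prop) : idl -> Prop :=
  fun y => forall x, U x -> perp x y.
Definition lpol (V : idl -> Prop) : filt -> Prop :=
  fun x => forall y, V y -> perp x y.

Definition stable (A : filt -> Prop) : Prop := A = lpol (rpol A).
Definition costable (B : idl -> Prop) : Prop := B = rpol (lpol B).

Definition Gjoin (A C : filt -> Prop) : filt -> Prop :=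
  lpol (rpol (fun x => A x \/ C x)).
Definition Gbot : filt -> Prop := lpol (rpol (fun _ => False)).

Definition gen_ideal (S : L -> Prop) : L -> Prop :=
  fun c => forall y : idl, (forall s, S s -> proj1_sig y s) -> proj1_sig y c.

Definition leadsto (x : filt) (v : idl) : L -> Prop :=
  gen_ideal (fun c => exists a b, proj1_sig x a /\ proj1_sig v b /\ c = imp a b).

Definition Trel (y : idl) (x : filt) (v : idl) : Prop :=
  forall c, leadsto x v c -> proj1_sig y c.

Definition blacktri (A : filt -> Prop) (B : idl -> Prop) : idl -> Prop :=
  rpol (lpol (fun y => exists x v, A x /\ B v /\ Trel y x v)).

Definition Gimp (A C : filt -> Prop) : filt -> Prop :=
  lpol (blacktri A (rpol C)).

Definition Xa (a : L) : filt -> Prop := fun x => proj1_sig x a.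

Definition sp_open (U : filt -> Prop) : Prop :=
  forall x, U x -> exists a, Xa a x /\ (forall z, Xa a z -> U z).

Definition sp_compact (K : filt -> Prop) : Prop :=
  forall C : (filt -> Prop) -> Prop,
    (forall U, C U -> sp_open U) ->
    (forall x, K x -> exists U, C U /\ U x) ->
    exists s : seq (filt -> Prop),
      (forall U, List.In U s -> C U) /\
      (forall x, K x -> exists U, List.In U s /\ U x).

Definition KOG (A : filt -> Prop) : Prop :=
  stable A /\ sp_compact A /\ sp_open A.

End CanonicalFrame.

(* Main.v *)
Require Import Defs.
From mathcomp Require Import all_boot all_order.
From Stdlib Require Import FunctionalExtensionality PropExtensionality.
From Stdlib Require List.
Import Order.LTheory.
Local Open Scope order_scope.

Lemma seteq (T : Type) (P Q : T -> Prop) : (forall x, P x <-> Q x) -> P = Q.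
Proof. move=> H; apply: functional_extensionality => x; apply: propositional_extensionality; exact: H. Qed.

Section Aux.
Context {disp : Order.disp_t} {L : tbLatticeType disp}.

Lemma fil_up (x : @filt disp L) a b : proj1_sig x a -> a <= b -> proj1_sig x b.
Proof. case: x => x [_ [H _]] /=; exact: H. Qed.
Lemma fil_meet (x : @filt disp L) a b : proj1_sig x a -> proj1_sig x b -> proj1_sig x (a `&` b).
Proof. case: x => x [_ [_ H]] /=; exact: H. Qed.
Lemma fil_top (x : @filt disp L) : proj1_sig x \top.
Proof. case: x => x [[a Ha] [H _]] /=; exact: (H a _ Ha (lex1 a)). Qed.
Lemma idl_dn (y : @idl disp L) a b : proj1_sig y b -> a <= b -> proj1_sig y a.
Proof. case: y => y [_ [H _]] /=; exact: H. Qed.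
Lemma idl_join (y : @idl disp L) a b : proj1_sig y a -> proj1_sig y b -> proj1_sig y (a `|` b).
Proof. case: y => y [_ [_ H]] /=; exact: H. Qed.
Lemma idl_bot (y : @idl disp L) : proj1_sig y \bot.
Proof. case: y => y [[a Ha] [H _]] /=; exact: (H _ a Ha (le0x a)). Qed.

Definition pfilt (a : L) : @filt disp L.
Proof.
exists (fun c => a <= c); split; first by exists a.
split; first by move=> c d H1 H2; exact: le_trans H1 H2.
by move=> c d H1 H2; rewrite lexI H1 H2.
Defined.
Definition pidl (a : L) : @idl disp L.
Proof.
exists (fun c => c <= a); split; first by exists a.
split; first by move=> c d H1 H2; exact: le_trans H2 H1.
by move=> c d H1 H2; rewrite leUx H1 H2.
Defined.

Lemma rpol_Xa (a : L) y : rpol (Xa a) y <-> proj1_sig y a.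
Proof.
split.
- move=> H; case: (H (pfilt a) (le_refl a)) => c [/= Hac Hc]; exact: idl_dn Hc Hac.
- move=> Hy x Hx; exists a; split => //.
Qed.

Lemma lpol_Ia (a : L) x : lpol (fun y : @idl disp L => proj1_sig y a) x <-> Xa a x.
Proof.
split.
- move=> H; case: (H (pidl a) (le_refl a)) => c [Hc /= Hca]; exact: fil_up Hc Hca.
- move=> Hx y Hy; exists a; split => //.
Qed.

Lemma lpol_ext (V W : @idl disp L -> Prop) : (forall y, V y <-> W y) -> forall x, lpol V x <-> lpol W x.
Proof. by move=> /seteq ->. Qed.
Lemma rpol_ext (V W : @filt disp L -> Prop) : (forall y, V y <-> W y) -> forall x, rpol V x <-> rpol W x.
Proof. by move=> /seteq ->. Qed.

Lemma Xa_stable_iff (a : L) x : lpol (rpol (Xa a)) x <-> Xa a x.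
Proof. rewrite -(lpol_Ia a x); apply: lpol_ext; exact: rpol_Xa. Qed.

Lemma rpol_union (a b : L) y : rpol (fun x => Xa a x \/ Xa b x) y <-> proj1_sig y (a `|` b).
Proof.
split.
- move=> H; apply: idl_join; apply/rpol_Xa => x Hx; apply: H; by [left|right].
- move=> H x [Hx|Hx].
  + apply: (proj2 (rpol_Xa a y)) Hx; exact: idl_dn H (leUl a b).
  + apply: (proj2 (rpol_Xa b y)) Hx; exact: idl_dn H (leUr b a).
Qed.

Lemma list_join (A : @filt disp L -> Prop) (s : seq (@filt disp L -> Prop)) :
  (forall U, List.In U s -> exists c, U = Xa c) ->
  exists d, forall y, rpol (fun x => exists U, List.In U s /\ U x) y <-> proj1_sig y d.
Proof.
elim: s => [|U s IH] Hs.
- exists \bot => y; split => _; first exact: idl_bot.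
  by move=> x [U [[] _]].
- case: (Hs U (or_introl erefl)) => c ->.
  case: IH => [V HV|d Hd]; first by apply: Hs; right.
  exists (c `|` d) => y; split.
  + move=> H; apply: idl_join.
    * apply/rpol_Xa => x Hx; apply: H; exists (Xa c); split => //; by left.
    * apply/Hd => x [V [HV Vx]]; apply: H; exists V; split => //; by right.
  + move=> H x [V [[<-|HV] Vx]].
    * apply: (proj2 (rpol_Xa c y)) Vx; exact: idl_dn H (leUl c d).
    * have Hd' : proj1_sig y d by exact: idl_dn H (leUr d c).
      by move/Hd: Hd'; apply; exists V.
Qed.

Lemma lrl (V : @idl disp L -> Prop) x : lpol (rpol (lpol V)) x <-> lpol V x.
Proof.
split.
- move=> H y Vy; apply: H => z Hz; exact: Hz.
- move=> H y Hy; exact: Hy.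
Qed.

End Aux.

Theorem proposition4p3 (disp : Order.disp_t) (L : tbLatticeType disp)
  (imp : L -> L -> L) (HL : integral_implicative imp) :
  (* a |-> X_a lands in KO G(X) and is onto KO G(X) *)
  (forall a : L, KOG (Xa a)) /\
  (forall A : @filt disp L -> Prop, KOG A -> exists a : L, A = Xa a) /\
  (* injective *)
  (forall a b : L, Xa a = Xa b -> a = b) /\
  (* preserves bounds, meet, join and implication *)
  Xa (\top : L) = (fun _ => True) /\
  Xa (\bot : L) = Gbot (L := L) /\
  (forall a b : L, Xa (a `&` b) = (fun x => Xa a x /\ Xa b x)) /\
  (forall a b : L, Xa (a `|` b) = Gjoin (Xa a) (Xa b)) /\
  (forall a b : L, Xa (imp a b) = Gimp imp (Xa a) (Xa b)).
Proof.
case: HL => [A1 [A2 _]].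
have anti : forall a a' c, a <= a' -> imp a' c <= imp a c.
  by move=> a a' c H; rewrite -(join_r H) A1 leIl.
have mono : forall a c c', c <= c' -> imp a c <= imp a c'.
  by move=> a c c' H; rewrite -(meet_l H) A2 leIr.
split.
  move=> a; split; first by apply: seteq => x; rewrite Xa_stable_iff.
  split; last by move=> x Hx; exists a; split.
  move=> C HC Hcov.
  case: (Hcov (pfilt a) (le_refl a)) => U [CU HU].
  case: (HC U CU _ HU) => c [/= Hac Hc].
  exists [:: U]; split; first by move=> V [<-|[]].
  move=> x Hx; exists U; split; first by left.
  apply: Hc; exact: fil_up Hx Hac.
split.
  move=> A [Hst [Hcp Hop]].
  pose C := fun U : @filt disp L -> Prop => exists c, U = Xa c /\ (forall z, Xa c z -> A z).
  case: (Hcp C).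
  - move=> U [c [-> _]] x Hx; exists c; split => //.
  - move=> x Ax; case: (Hop x Ax) => c [Hc Hsub]; exists (Xa c); split => //.
    exists c; split => //.
  - move=> s [HsC Hscov].
    case: (list_join A s) => [U /HsC [c [-> _]]|d Hd]; first by exists c.
    exists d; rewrite Hst; apply: seteq => x.
    rewrite -(lpol_Ia d x); apply: lpol_ext => y.
    rewrite -Hd; apply: rpol_ext => z; split; first exact: Hscov.
    move=> [U [HU Uz]]; case: (HsC U HU) => c [E Hc]; subst U; exact: Hc.
split.
  move=> a b E; apply/eqP; rewrite eq_le; apply/andP; split.
  - have : Xa a (pfilt a) by exact: le_refl.
    by rewrite E.
  - have : Xa b (pfilt b) by exact: le_refl.
    by rewrite -E.
split.
  apply: seteq => x; split => // _; exact: fil_top.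
split.
  apply: seteq => x; rewrite /Gbot -(lpol_Ia \bot x); apply: lpol_ext => y.
  split => _; last exact: idl_bot.
  by move=> z [].
split.
  move=> a b; apply: seteq => x; split.
  - move=> H; split; [exact: fil_up H (leIl a b)|exact: fil_up H (leIr b a)].
  - move=> [Ha Hb]; exact: fil_meet.
split.
  move=> a b; apply: seteq => x; rewrite /Gjoin -(lpol_Ia (a `|` b) x).
  apply: lpol_ext => y; by rewrite rpol_union.
move=> a b; apply: seteq => x; rewrite /Gimp /blacktri lrl.
split.
- move=> Hx y [x' [v [Hx' [Hv HT]]]]; exists (imp a b); split => //.
  apply: HT => I HI; apply: HI; exists a, b; split => //; split => //.
  exact/rpol_Xa.
- move=> H.
  have Hy : (exists x0 v, Xa a x0 /\ rpol (Xa b) v /\ Trel imp (pidl (imp a b)) x0 v).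
    exists (pfilt a), (pidl b); split; first exact: le_refl.
    split; first by apply/rpol_Xa; exact: le_refl.
    move=> c Hc; apply: (Hc (pidl (imp a b))).
    move=> s [a' [b' [/= Ha' [Hb' ->]]]].
    exact: le_trans (anti _ _ _ Ha') (mono _ _ _ Hb').
  case: (H _ Hy) => c [Hc /= Hle]; exact: fil_up Hc Hle.
Qed.
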